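(* Let $\mathcal O_5$ be the family of outerplanar graphs with girth at least $5$. Then every push graph whose underlying graph belongs to $\mathcal O_5$ admits a homomorphism to the directed $3$-cycle $\vec C_3$, and $\chi_p(\mathcal O_5)=3$.
   Context: An oriented graph is a directed graph with no loops and no pair of opposite arcs; an orientation of an undirected simple graph $G$ is an oriented graph obtained by orienting each edge of $G$. A homomorphism of an oriented graph $\vec G$ to an oriented graph $\vec H$ is a map $\varphi:V(\vec G)\to V(\vec H)$ with $\varphi(u)\varphi(v)$ an arc of $\vec H$ whenever $uv$ is an arc of $\vec G$. To push a vertex means to reverse all arcs incident with it. The push graph $[\vec G]$ is the set of oriented graphs obtainable from $\vec G$ by pushing some set of vertices (its presentations); its underlying graph is the common underlying graph of its presentations. A push graph $[\vec G]$ admits a homomorphism to an oriented graph $\vec H$ if some presentation of $[\vec G]$ does. The push chromatic number $\chi_p([\vec G])$ is the minimum number of vertices of an oriented graph $\vec H$ with $[\vec G]\to\vec H$; for an undirected graph $G$, $\chi_p(G)$ is the maximum of $\chi_p([\vec G])$ over all orientations $\vec G$ of $G$; for a family $\mathcal F$, $\chi_p(\mathcal F)$ is the maximum of $\chi_p(G)$ over $G\in\mathcal F$. The girth of a graph is the length of its shortest cycle (infinite for forests). *)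

(* Defs.v *)
From mathcomp Require Import all_boot.
Set Implicit Arguments. Unset Strict Implicit. Unset Printing Implicit Defensive.

Definition simple_graph (T : finType) (e : rel T) : Prop :=
  irreflexive e /\ symmetric e.

Definition girth_ge (T : finType) (e : rel T) (g : nat) : Prop :=
  forall s : seq T, uniq s -> 3 <= size s -> cycle e s -> g <= size s.

(* Outerplanar: vertices can be placed (injectively) in convex/circular
   position so that edges, drawn as chords, do not cross. *)
Definition outerplanar (T : finType) (e : rel T) : Prop :=
  exists f : T -> nat, injective f /\
    forall x y u v, e x y -> e u v -> ~~ ((f x < f u) && (f u < f y) && (f y < f v)).

Definition in_O5 (T : finType) (e : rel T) : Prop :=
  simple_graph e /\ outerplanar e /\ girth_ge e 5.

Definition oriented (T : finType) (a : rel T) : Prop :=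
  forall x y, a x y -> a y x -> False.
Definition oriented_graph (T : finType) (a : rel T) : Prop :=
  irreflexive a /\ oriented a.

Definition orientation (T : finType) (a e : rel T) : Prop :=
  oriented_graph a /\ forall x y, e x y = a x y || a y x.

Definition push (T : finType) (a : rel T) (S : {set T}) : rel T :=
  fun x y => if (x \in S) (+) (y \in S) then a y x else a x y.

Definition hom (T U : finType) (a : rel T) (b : rel U) (phi : T -> U) : Prop :=
  forall x y, a x y -> b (phi x) (phi y).

(* The push graph [a] admits a homomorphism to b: some presentation does. *)
Definition push_hom (T U : finType) (a : rel T) (b : rel U) : Prop :=
  exists (S : {set T}) (phi : T -> U), hom (push a S) b phi.

Definition C3 : rel 'I_3 := fun i j => (j : nat) == (i.+1 %% 3).

Definition push_colorable (T : finType) (a : rel T) (n : nat) : Prop :=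
  exists H : rel 'I_n, oriented_graph H /\ push_hom a H.

Definition push_chromatic_number (T : finType) (a : rel T) (k : nat) : Prop :=
  push_colorable a k /\ forall n, n < k -> ~ push_colorable a n.

Definition family_push_chromatic_number
    (F : forall T : finType, rel T -> Prop) (k : nat) : Prop :=
  (forall (T : finType) (e a : rel T), F T e -> orientation a e ->
      push_colorable a k) /\
  (exists (T : finType) (e a : rel T), F T e /\ orientation a e /\
      push_chromatic_number a k).

(* Main.v *)
Require Import Defs.
From mathcomp Require Import all_boot.
Set Implicit Arguments. Unset Strict Implicit. Unset Printing Implicit Defensive.

Definition btw (T : finType) (A : {set T}) (f : T -> nat) (u v : T) : {set T} :=
  [set z in A | (f u < f z) && (f z < f v)].
Definition nb2 (T : finType) (e : rel T) (A : {set T}) (v p q : T) : Prop :=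
  forall t, t \in A -> e v t -> t = p \/ t = q.

Section Struct.
Variables (T : finType) (e : rel T) (f : T -> nat) (A : {set T}).
Hypotheses (eirr : irreflexive e) (esym : symmetric e) (finj : injective f)
  (NC : forall x y u v, e x y -> e u v -> ~~ ((f x < f u) && (f u < f y) && (f y < f v)))
  (G5 : girth_ge e 5)
  (Hdeg : forall v, v \in A -> exists z1 z2, [/\ z1 \in A, z2 \in A, z1 != z2, e v z1 & e v z2]).

Lemma inbtw u v z : (z \in btw A f u v) = [&& z \in A, f u < f z & f z < f v].
Proof. by rewrite inE. Qed.

Lemma btw0F u v z : btw A f u v = set0 -> z \in A -> f u < f z -> f z < f v -> False.
Proof. by move=> H zA h1 h2; have := inbtw u v z; rewrite H inE zA h1 h2. Qed.

Lemma finjF u v : u != v -> f u != f v.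
Proof. by apply: contra => /eqP /finj ->. Qed.

Lemma prev_uniq w t p : t \in A -> p \in A -> f t < f w -> f p < f w ->
  btw A f t w = set0 -> btw A f p w = set0 -> t = p.
Proof.
move=> tA pA h1 h2 b1 b2; apply: finj.
case: (ltngtP (f t) (f p)) => // H.
- by case: (btw0F b1 pA H h2).
- by case: (btw0F b2 tA H h1).
Qed.

Lemma next_uniq w t p : t \in A -> p \in A -> f w < f t -> f w < f p ->
  btw A f w t = set0 -> btw A f w p = set0 -> t = p.
Proof.
move=> tA pA h1 h2 b1 b2; apply: finj.
case: (ltngtP (f t) (f p)) => // H.
- by case: (btw0F b2 tA h1 H).
- by case: (btw0F b1 pA h2 H).
Qed.

Section Inner.
Variables (x y : T).
Hypotheses (xA : x \in A) (yA : y \in A) (exy : e x y) (fxy : f x < f y)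
  (Hmin : forall p q, p \in A -> q \in A -> e p q -> f x <= f p -> f p < f q -> f q <= f y ->
     (p != x) || (q != y) -> btw A f p q = set0).

Lemma closure z t : z \in btw A f x y -> e z t -> f x <= f t /\ f t <= f y.
Proof.
rewrite inbtw => /and3P[zA h1 h2] ezt; split.
- rewrite leqNgt; apply/negP => H.
  have ezt' : e t z by rewrite esym.
  by have := NC ezt' exy; rewrite H h1 h2.
- rewrite leqNgt; apply/negP => H.
  by have := NC exy ezt; rewrite h1 h2 H.
Qed.

Lemma classify w p t : w \in btw A f x y -> p \in A -> f x <= f p -> f p < f w ->
  btw A f p w = set0 -> t \in A -> e w t ->
  t = p \/ [/\ f w < f t, f t <= f y & btw A f w t = set0].
Proof.
move=> wb pA hp1 hp2 bp tA ewt.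
have [h1 h2] := closure wb ewt.
move: (wb); rewrite inbtw => /and3P[wA hw1 hw2].
have twn : t != w by apply: contraTneq ewt => ->; rewrite eirr.
case: (ltngtP (f t) (f w)) => H.
- left; apply: (prev_uniq tA pA H hp2 _ bp).
  apply: Hmin => //; first by rewrite esym.
  + exact: ltnW.
  + by apply/orP; right; apply: contraTneq hw2 => ->; rewrite ltnn.
- right; split => //; apply: Hmin => //.
  + exact: ltnW.
  + by apply/orP; left; apply: contraTneq hw1 => ->; rewrite ltnn.
- by move/finj: H => /eqP; rewrite (negbTE twn).
Qed.

Lemma inner w p : w \in btw A f x y -> p \in A -> f x <= f p -> f p < f w ->
  btw A f p w = set0 ->
  exists q, [/\ q \in A, f w < f q, f q <= f y, btw A f w q = set0 & nb2 e A w p q]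
            /\ (e w p /\ e w q).
Proof.
move=> wb pA hp1 hp2 bp.
move: (wb); rewrite inbtw => /and3P[wA hw1 hw2].
have [z1 [z2 [z1A z2A z12 e1 e2]]] := Hdeg wA.
have C := classify wb pA hp1 hp2 bp.
case: (C _ z1A e1) => [Ez1 | [a1 a2 a3]]; case: (C _ z2A e2) => [Ez2 | [b1 b2 b3]].
- by rewrite Ez1 Ez2 eqxx in z12.
- exists z2; split; last by split => //; rewrite -Ez1.
  split => // t tA ewt; case: (C _ tA ewt) => [->|[c1 c2 c3]]; first by left.
  by right; exact: (next_uniq tA z2A c1 b1 c3 b3).
- exists z1; split; last by split => //; rewrite -Ez2.
  split => // t tA ewt; case: (C _ tA ewt) => [->|[c1 c2 c3]]; first by left.
  by right; exact: (next_uniq tA z1A c1 a1 c3 a3).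
- by have Ez := next_uniq z1A z2A a1 b1 a3 b3; rewrite Ez eqxx in z12.
Qed.

End Inner.


Lemma neq_lt u v : f u < f v -> (u == v) = false.
Proof. by move=> H; apply/negbTE; apply: contraTneq H => ->; rewrite ltnn. Qed.

Lemma structure : A != set0 ->
 (exists x v1 v2 v3 v4 w, [/\ x \in A, v1 \in A, v2 \in A, v3 \in A & v4 \in A] /\ w \in A /\
   [/\ f x < f v1, f v1 < f v2, f v2 < f v3, f v3 < f v4 & f v4 < f w] /\
   [/\ nb2 e A v1 x v2, nb2 e A v2 v1 v3, nb2 e A v3 v2 v4 & nb2 e A v4 v3 w]) \/
 (exists x v1 v2 v3 y, [/\ x \in A, v1 \in A, v2 \in A, v3 \in A & y \in A] /\ e x y /\
   [/\ f x < f v1, f v1 < f v2, f v2 < f v3 & f v3 < f y] /\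
   [/\ nb2 e A v1 x v2, nb2 e A v2 v1 v3 & nb2 e A v3 v2 y]).
Proof.
move=> /set0Pn[a0 a0A].
pose cand (p : T * T) := [&& p.1 \in A, p.2 \in A, e p.1 p.2, f p.1 < f p.2 & btw A f p.1 p.2 != set0].
have [p0 cp0] : exists p0, cand p0.
  case: (arg_minnP f a0A) => v0 v0A v0min.
  have {}v0A : v0 \in A by [].
  have [z1 [z2 [z1A z2A z12 e1 e2]]] := Hdeg v0A.
  have lt1 : f v0 < f z1.
    rewrite ltn_neqAle v0min // andbT; apply: finjF.
    by apply: contraTneq e1 => <-; rewrite eirr.
  have lt2 : f v0 < f z2.
    rewrite ltn_neqAle v0min // andbT; apply: finjF.
    by apply: contraTneq e2 => <-; rewrite eirr.
  case: (ltngtP (f z1) (f z2)) => H.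
  - exists (v0, z2); rewrite /cand /= v0A z2A e2 lt2 /=; apply/set0Pn; exists z1.
    by rewrite inbtw z1A lt1 H.
  - exists (v0, z1); rewrite /cand /= v0A z1A e1 lt1 /=; apply/set0Pn; exists z2.
    by rewrite inbtw z2A lt2 H.
  - by move/finj: H => Hz; rewrite Hz eqxx in z12.
case: (arg_minnP (fun p : T * T => #|btw A f p.1 p.2|) cp0) => [[x y]].
rewrite /cand /= => /and5P[xA yA exy fxy bxy] Hmin0.
have Hmin : forall p q, p \in A -> q \in A -> e p q -> f x <= f p -> f p < f q -> f q <= f y ->
     (p != x) || (q != y) -> btw A f p q = set0.
  move=> p q pA qA epq h1 h2 h3 hne; apply/eqP; apply/negPn/negP => bpq.
  have H1 := Hmin0 (p, q); rewrite /cand /= pA qA epq h2 bpq /= in H1.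
  have H2 : btw A f p q \proper btw A f x y.
    apply/properP; split.
    - apply/subsetP => z; rewrite !inbtw => /and3P[-> hz1 hz2] /=; apply/andP; split.
      + exact: leq_ltn_trans h1 hz1.
      + exact: leq_trans hz2 h3.
    - case/orP: hne => hne.
      + have := finjF hne => hne'.
        exists p; last by rewrite inbtw ltnn andbF.
        by rewrite inbtw pA /= ltn_neqAle eq_sym hne' h1 (leq_trans h2 h3).
      + have := finjF hne => hne'.
        exists q; last by rewrite inbtw ltnn !andbF.
        by rewrite inbtw qA /= (leq_ltn_trans h1 h2) ltn_neqAle hne' h3.
  by have := proper_card H2; rewrite ltnNge H1 //.
have [w1 w1b w1min] : exists2 w1, w1 \in btw A f x y & forall z, z \in btw A f x y -> f w1 <= f z.
  case/set0Pn: bxy => z0 z0b; case: (arg_minnP f z0b) => w wb wm; exists w => //.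
move: (w1b); rewrite inbtw => /and3P[w1A hxw1 hw1y].
have bw1 : btw A f x w1 = set0.
  apply/setP => z; rewrite inbtw inE; apply/negP => /and3P[zA h1 h2].
  have := w1min z; rewrite inbtw zA h1 /= (ltn_trans h2 hw1y) => /(_ isT).
  by rewrite leqNgt h2.
have [w2 [[w2A hw2a hw2b bw2 nbw1] [ew1x ew1w2]]] := inner exy Hmin w1b xA (leqnn _) hxw1 bw1.
have hw2y : f w2 < f y.
  rewrite ltn_neqAle hw2b andbT; apply/negP => /eqP/finj Ew; rewrite Ew in ew1w2.
  have := G5 (s := [:: x; w1; y]); rewrite /= !inE !neq_lt //= esym ew1x ew1w2 esym exy.
  by move=> /(_ isT isT isT).
have hxw2 : f x < f w2 := ltn_trans hxw1 hw2a.
have w2b : w2 \in btw A f x y by rewrite inbtw w2A hw2y hxw2.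
have [w3 [[w3A hw3a hw3b bw3 nbw2] [ew2w1 ew2w3]]] :=
  inner exy Hmin w2b w1A (ltnW hxw1) hw2a bw2.
have hw3y : f w3 < f y.
  rewrite ltn_neqAle hw3b andbT; apply/negP => /eqP/finj Ew; rewrite Ew in ew2w3.
  have := G5 (s := [:: x; w1; w2; y]).
  rewrite /= !inE !neq_lt //=.
  rewrite esym ew1x ew1w2 ew2w3 esym exy.
  by move=> /(_ isT isT isT).
have hxw3 : f x < f w3 := ltn_trans hxw2 hw3a.
have w3b : w3 \in btw A f x y by rewrite inbtw w3A hw3y hxw3.
have [w4 [[w4A hw4a hw4b bw4 nbw3] [ew3w2 ew3w4]]] :=
  inner exy Hmin w3b w2A (ltnW hxw2) hw3a bw3.
case E: (w4 == y).
- right; move/eqP: E => E; rewrite E in nbw3.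
  exists x, w1, w2, w3, y; split => //; split => //.
- left.
  have hw4y : f w4 < f y by rewrite ltn_neqAle hw4b andbT; apply: finjF; rewrite E.
  have w4b : w4 \in btw A f x y by rewrite inbtw w4A hw4y (ltn_trans hxw3 hw4a).
  have [w5 [[w5A hw5a hw5b bw5 nbw4] _]] :=
    inner exy Hmin w4b w3A (ltnW hxw3) hw4a bw4.
  exists x, w1, w2, w3, w4, w5; split => //.
Qed.

End Struct.

Definition st := ('I_3 * bool)%type.
Definition ok (p q : st) : bool := if p.2 (+) q.2 then C3 q.1 p.1 else C3 p.1 q.1.
Definition erel (d : bool) (p q : st) := if d then ok p q else ok q p.
Definition o0 : 'I_3 := @Ordinal 3 0 isT.
Definition o1 : 'I_3 := @Ordinal 3 1 isT.
Definition o2 : 'I_3 := @Ordinal 3 2 isT.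
Definition stl : seq st := [:: (o0,false);(o0,true);(o1,false);(o1,true);(o2,false);(o2,true)].
Definition bl := [:: true; false].
Lemma stlP (q : st) : q \in stl.
Proof. by case: q => [[[|[|[|?]]] ?] []] //; rewrite (_ : _ = o0) ?(_ : _ = o1) ?(_ : _ = o2) //; apply: val_inj. Qed.
Lemma blP (b : bool) : b \in bl. Proof. by case: b. Qed.
Definition chain4b := all (fun p => all (fun r => all (fun d1 => all (fun d2 => all (fun d3 => all (fun d4 => all (fun d5 =>
  has (fun q1 => has (fun q2 => has (fun q3 => has (fun q4 =>
     [&& erel d1 p q1, erel d2 q1 q2, erel d3 q2 q3, erel d4 q3 q4 & erel d5 r q4]) stl) stl) stl) stl) bl) bl) bl) bl) bl) stl) stl.
Definition chain3b := all (fun p => all (fun r => all (fun d0 => all (fun d1 => all (fun d2 => all (fun d3 => all (fun d4 =>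
  erel d0 p r ==> has (fun q1 => has (fun q2 => has (fun q3 =>
     [&& erel d1 p q1, erel d2 q1 q2, erel d3 q2 q3 & erel d4 r q3]) stl) stl) stl) bl) bl) bl) bl) bl) stl) stl.
Lemma c4 : chain4b. Proof. vm_compute. reflexivity. Qed.
Lemma c3 : chain3b. Proof. vm_compute. reflexivity. Qed.

Definition step1b := all (fun p => all (fun d => has (fun q => erel d p q) stl) bl) stl.
Lemma s1 : step1b. Proof. vm_compute. reflexivity. Qed.

Lemma step1 p d : exists q, erel d p q.
Proof.
have := s1; move/allP/(_ p (stlP p))/allP/(_ d (blP d))/hasP => [q _ H]; by exists q.
Qed.

Lemma chain4 p r d1 d2 d3 d4 d5 : exists q1 q2 q3 q4,
  [&& erel d1 p q1, erel d2 q1 q2, erel d3 q2 q3, erel d4 q3 q4 & erel d5 r q4].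
Proof.
have := c4; move/allP/(_ p (stlP p))/allP/(_ r (stlP r))/allP/(_ d1 (blP d1))
  /allP/(_ d2 (blP d2))/allP/(_ d3 (blP d3))/allP/(_ d4 (blP d4))/allP/(_ d5 (blP d5)).
move=> /hasP[q1 _] /hasP[q2 _] /hasP[q3 _] /hasP[q4 _] H; by exists q1, q2, q3, q4.
Qed.

Lemma chain3 p r d0 d1 d2 d3 d4 : erel d0 p r -> exists q1 q2 q3,
  [&& erel d1 p q1, erel d2 q1 q2, erel d3 q2 q3 & erel d4 r q3].
Proof.
have := c3; move/allP/(_ p (stlP p))/allP/(_ r (stlP r))/allP/(_ d0 (blP d0))
  /allP/(_ d1 (blP d1))/allP/(_ d2 (blP d2))/allP/(_ d3 (blP d3))/allP/(_ d4 (blP d4)).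
move=> /implyP H /H /hasP[q1 _] /hasP[q2 _] /hasP[q3 _] {}H; by exists q1, q2, q3.
Qed.

Definition good (T : finType) (a : rel T) (B : {set T}) (c : T -> st) :=
  forall x y, x \in B -> y \in B -> a x y -> ok (c x) (c y).
Definition upd (T : finType) (c : T -> st) (v : T) (q : st) : T -> st :=
  fun z => if z == v then q else c z.

Lemma good_sub (T : finType) (a : rel T) (A B : {set T}) c :
  A \subset B -> good a B c -> good a A c.
Proof. by move=> /subsetP sAB g x y xA yA; apply: g; apply: sAB. Qed.

Lemma good_add (T : finType) (e a : rel T) (B : {set T}) c v q :
  orientation a e -> v \notin B -> good a B c ->
  (forall z, z \in B -> e v z -> erel (a z v) (c z) q) ->
  good a (v |: B) (upd c v q).
Proof.
move=> [[airr aor] eae] vB gB Hv x y; rewrite !inE /upd.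
have nB : forall z, z \in B -> (z == v) = false.
  by move=> z zB; apply/negbTE; apply: contraNneq vB => <-.
case/orP => [/eqP->|xB]; case/orP => [/eqP->|yB] axy.
- by rewrite airr in axy.
- rewrite eqxx (nB _ yB).
  have := Hv y yB; rewrite eae axy => /(_ isT).
  by case Ayv: (a y v) => //; case: (aor _ _ axy Ayv).
- rewrite eqxx (nB _ xB).
  by have := Hv x xB; rewrite eae axy orbT => /(_ isT).
- by rewrite (nB _ xB) (nB _ yB); apply: gB.
Qed.

Definition k0 : 'I_5 := @Ordinal 5 0 isT.
Definition k1 : 'I_5 := @Ordinal 5 1 isT.
Definition k2 : 'I_5 := @Ordinal 5 2 isT.
Definition k3 : 'I_5 := @Ordinal 5 3 isT.
Definition k4 : 'I_5 := @Ordinal 5 4 isT.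
Definition l5 : seq 'I_5 := [:: k0; k1; k2; k3; k4].
Lemma l5P i : i \in l5.
Proof. by case: i => [[|[|[|[|[|?]]]]] ?]. Qed.
Lemma all5 (P : pred 'I_5) : all P l5 -> forall i, P i.
Proof. by move=> /allP H i; apply: H; apply: l5P. Qed.
Definition e5 : rel 'I_5 := fun i j => (val j == (val i).+1 %% 5) || (val i == (val j).+1 %% 5).
Definition a5 : rel 'I_5 := fun i j => val j == (val i).+1 %% 5.

Lemma I2 (x y z : 'I_2) : x != y -> y != z -> x = z.
Proof. by move: x y z => [[|[|?]] ?] [[|[|?]] ?] [[|[|?]] ?] //= _ _; apply/val_inj. Qed.

Lemma ltneq (T : finType) (f : T -> nat) u v : f u < f v -> u != v.
Proof. by apply: contraTneq => ->; rewrite ltnn. Qed.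
Lemma gtneq (T : finType) (f : T -> nat) u v : f v < f u -> u != v.
Proof. by apply: contraTneq => ->; rewrite ltnn. Qed.

Lemma notin4 (T : finType) (A : {set T}) z v1 v2 v3 v4 :
  z \in A -> z != v1 -> z != v2 -> z != v3 -> z != v4 -> z \in A :\: [set v1; v2; v3; v4].
Proof. by move=> zA n1 n2 n3 n4; rewrite !inE zA (negbTE n1) (negbTE n2) (negbTE n3) (negbTE n4). Qed.
Lemma notin3 (T : finType) (A : {set T}) z v1 v2 v3 :
  z \in A -> z != v1 -> z != v2 -> z != v3 -> z \in A :\: [set v1; v2; v3].
Proof. by move=> zA n1 n2 n3; rewrite !inE zA (negbTE n1) (negbTE n2) (negbTE n3). Qed.

Lemma test (T : finType) (A : {set T}) z v1 v2 v3 v4 :  z \in A -> z \in v4 |: (v3 |: (v2 |: (v1 |: (A :\: [set v1; v2; v3; v4])))).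
Proof. move=> zA; rewrite !inE zA andbT. by case: (z == v4); case: (z == v3); case: (z == v2); case: (z == v1). Qed.


Lemma color_all (T : finType) (e a : rel T) : in_O5 e -> orientation a e ->
  forall A : {set T}, exists c, good a A c.
Proof.
move=> [[eirr esym] [[f [finj NC]] G5]] Hor A.
have eae := Hor.2.
have [n] := ubnP #|A|; elim: n A => // n IH A szA.
case: (eqVneq A set0) => [A0 | An0].
  by exists (fun _ => (o0, false)) => x y; rewrite A0 inE.
have subD : forall (B : {set T}) z, z \in A :\: B -> z \in A.
  by move=> B z; rewrite inE => /andP[].
have cardD : forall (B : {set T}) z, z \in A -> z \in B -> #|A :\: B| < n.
  move=> B z zA zB; rewrite ltnS in szA; apply: leq_trans _ szA; apply: proper_card; apply/properP; split.
  - by apply/subsetP => t /subD.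
  - by exists z => //; rewrite inE zB.
case: (boolP [exists v in A, [forall z1 in A, forall z2 in A, (e v z1 && e v z2) ==> (z1 == z2)]]).
- case/existsP => v /andP[vA /forallP Hv].
  have Hu : forall z1 z2, z1 \in A -> z2 \in A -> e v z1 -> e v z2 -> z1 = z2.
    move=> z1 z2 h1 h2 e1 e2; apply/eqP.
    by move: (Hv z1); rewrite h1 /= => /forallP/(_ z2); rewrite h2 e1 e2.
  have [c gc] : exists c, good a (A :\ v) c.
    by apply: IH; apply: (cardD [set v] v vA); rewrite inE.
  have vnot : v \notin A :\ v by rewrite !inE eqxx.
  rewrite -(setD1K vA).
  case: (boolP [exists u in A :\ v, e v u]) => [/existsP[u /andP[uA' evu]] | Hno].
  + have [q hq] := step1 (c u) (a u v).
    exists (upd c v q); apply: good_add Hor vnot gc _ => z zA' evz.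
    by have -> : z = u by apply: Hu => //; [move: zA' | move: uA']; rewrite !inE => /andP[].
  + exists (upd c v (o0, false)); apply: good_add Hor vnot gc _ => z zA' evz.
    by case/negP: Hno; apply/existsP; exists z; rewrite zA' evz.
- rewrite negb_exists => /forallP Hall.
  have Hdeg : forall v, v \in A -> exists z1 z2, [/\ z1 \in A, z2 \in A, z1 != z2, e v z1 & e v z2].
    move=> v vA; move: (Hall v); rewrite vA /= negb_forall => /existsP[z1].
    rewrite negb_imply => /andP[z1A]; rewrite negb_forall => /existsP[z2].
    rewrite negb_imply => /andP[z2A]; rewrite negb_imply => /andP[/andP[e1 e2] ne].
    by exists z1, z2.
  case: (structure eirr esym finj NC G5 Hdeg An0).
  + move=> [x [v1 [v2 [v3 [v4 [w [[xA v1A v2A v3A v4A] [wA [[o1' o2' o3' o4' o5'] [n1 n2 n3 n4]]]]]]]]]].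
    have xv2 := ltn_trans o1' o2'. have xv3 := ltn_trans xv2 o3'. have xv4 := ltn_trans xv3 o4'.
    have v13 := ltn_trans o2' o3'. have v14 := ltn_trans v13 o4'. have v24 := ltn_trans o3' o4'.
    have v3w := ltn_trans o4' o5'. have v2w := ltn_trans o3' v3w. have v1w := ltn_trans o2' v2w.
    set A' := A :\: [set v1; v2; v3; v4].
    have [c gc] : exists c, good a A' c.
      by apply: IH; apply: (cardD _ v1 v1A); rewrite !inE eqxx.
    have xA' : x \in A' by apply: notin4 => //; apply: (ltneq (f:=f)).
    have wA' : w \in A' by apply: notin4 => //; apply: (gtneq (f:=f)).
    have nA' : forall z, z \in [set v1; v2; v3; v4] -> z \notin A'.
      by move=> z zv; rewrite inE zv.
    have v1n : v1 \notin A' by apply: nA'; rewrite !inE eqxx.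
    have v2n : v2 \notin A' by apply: nA'; rewrite !inE eqxx !orbT.
    have v3n : v3 \notin A' by apply: nA'; rewrite !inE eqxx !orbT.
    have v4n : v4 \notin A' by apply: nA'; rewrite !inE eqxx !orbT.
    have [q1 [q2 [q3 [q4 /and5P[h1 h2 h3 h4 h5]]]]] :=
      chain4 (c x) (c w) (a x v1) (a v1 v2) (a v2 v3) (a v3 v4) (a w v4).
    have g1 : good a (v1 |: A') (upd c v1 q1).
      apply: good_add Hor v1n gc _ => z zA' ez.
      case: (n1 z (subD _ _ zA') ez) => Ez; subst z => //.
      by rewrite zA' in v2n.
    have g2 : good a (v2 |: (v1 |: A')) (upd (upd c v1 q1) v2 q2).
      apply: good_add Hor _ g1 _; first by rewrite in_setU1 negb_or v2n (gtneq o2').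
      move=> z; rewrite in_setU1 => zB ez.
      have zA : z \in A by case/orP: zB => [/eqP->|/subD].
      case: (n2 z zA ez) => Ez; subst z; first by rewrite /upd eqxx.
      by move: zB; rewrite (negbTE v3n) orbF (negbTE (gtneq v13)).
    have g3 : good a (v3 |: (v2 |: (v1 |: A'))) (upd (upd (upd c v1 q1) v2 q2) v3 q3).
      apply: good_add Hor _ g2 _.
        by rewrite !in_setU1 !negb_or v3n (gtneq o3') (gtneq v13).
      move=> z; rewrite !in_setU1 => zB ez.
      have zA : z \in A by case/or3P: zB => [/eqP->|/eqP->|/subD].
      case: (n3 z zA ez) => Ez; subst z; first by rewrite /upd eqxx.
      by move: zB; rewrite (negbTE v4n) orbF (negbTE (gtneq v24)) (negbTE (gtneq v14)).
    have g4 : good a (v4 |: (v3 |: (v2 |: (v1 |: A'))))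
                (upd (upd (upd (upd c v1 q1) v2 q2) v3 q3) v4 q4).
      apply: good_add Hor _ g3 _.
        by rewrite !in_setU1 !negb_or v4n (gtneq o4') (gtneq v24) (gtneq v14).
      move=> z; rewrite !in_setU1 => zB ez.
      have zA : z \in A by case/or4P: zB => [/eqP->|/eqP->|/eqP->|/subD].
      case: (n4 z zA ez) => Ez; subst z; first by rewrite /upd eqxx.
      by rewrite /upd (negbTE (gtneq v3w)) (negbTE (gtneq v2w)) (negbTE (gtneq v1w)).
    exists (upd (upd (upd (upd c v1 q1) v2 q2) v3 q3) v4 q4).
    apply: good_sub g4; apply/subsetP => z zA; rewrite !inE zA andbT.
    by case: (z == v4); case: (z == v3); case: (z == v2); case: (z == v1).
  + move=> [x [v1 [v2 [v3 [y [[xA v1A v2A v3A yA] [exy [[o1' o2' o3' o4'] [n1 n2 n3]]]]]]]]].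
    have xv2 := ltn_trans o1' o2'. have xv3 := ltn_trans xv2 o3'.
    have v13 := ltn_trans o2' o3'.
    have v3y := o4'. have v2y := ltn_trans o3' v3y. have v1y := ltn_trans o2' v2y.
    set A' := A :\: [set v1; v2; v3].
    have [c gc] : exists c, good a A' c.
      by apply: IH; apply: (cardD _ v1 v1A); rewrite !inE eqxx.
    have xA' : x \in A' by apply: notin3 => //; apply: (ltneq (f:=f)).
    have yA' : y \in A' by apply: notin3 => //; apply: (gtneq (f:=f)).
    have nA' : forall z, z \in [set v1; v2; v3] -> z \notin A'.
      by move=> z zv; rewrite inE zv.
    have v1n : v1 \notin A' by apply: nA'; rewrite !inE eqxx.
    have v2n : v2 \notin A' by apply: nA'; rewrite !inE eqxx !orbT.
    have v3n : v3 \notin A' by apply: nA'; rewrite !inE eqxx !orbT.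
    have hxy : erel (a x y) (c x) (c y).
      case Axy: (a x y); first exact: gc xA' yA' Axy.
      by rewrite eae Axy /= in exy; exact: gc yA' xA' exy.
    have [q1 [q2 [q3 /and4P[h1 h2 h3 h4]]]] :=
      chain3 (a x v1) (a v1 v2) (a v2 v3) (a y v3) hxy.
    have g1 : good a (v1 |: A') (upd c v1 q1).
      apply: good_add Hor v1n gc _ => z zA' ez.
      case: (n1 z (subD _ _ zA') ez) => Ez; subst z => //.
      by rewrite zA' in v2n.
    have g2 : good a (v2 |: (v1 |: A')) (upd (upd c v1 q1) v2 q2).
      apply: good_add Hor _ g1 _; first by rewrite in_setU1 negb_or v2n (gtneq o2').
      move=> z; rewrite in_setU1 => zB ez.
      have zA : z \in A by case/orP: zB => [/eqP->|/subD].
      case: (n2 z zA ez) => Ez; subst z; first by rewrite /upd eqxx.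
      by move: zB; rewrite (negbTE v3n) orbF (negbTE (gtneq v13)).
    have g3 : good a (v3 |: (v2 |: (v1 |: A'))) (upd (upd (upd c v1 q1) v2 q2) v3 q3).
      apply: good_add Hor _ g2 _.
        by rewrite !in_setU1 !negb_or v3n (gtneq o3') (gtneq v13).
      move=> z; rewrite !in_setU1 => zB ez.
      have zA : z \in A by case/or3P: zB => [/eqP->|/eqP->|/subD].
      case: (n3 z zA ez) => Ez; subst z; first by rewrite /upd eqxx.
      by rewrite /upd (negbTE (gtneq v2y)) (negbTE (gtneq v1y)).
    exists (upd (upd (upd c v1 q1) v2 q2) v3 q3).
    apply: good_sub g3; apply/subsetP => z zA; rewrite !inE zA andbT.
    by case: (z == v3); case: (z == v2); case: (z == v1).
Qed.

Definition l3 : seq 'I_3 := [:: o0; o1; o2].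
Lemma l3P i : i \in l3.
Proof. by case: i => [[|[|[|?]]] ?]. Qed.
Lemma all3 (P : pred 'I_3) : all P l3 -> forall i, P i.
Proof. by move=> /allP H i; apply: H; apply: l3P. Qed.

Lemma C3_oriented : oriented_graph C3.
Proof.
split.
- move=> x; apply/negbTE; move: x; apply: all3; by vm_compute.
- move=> x y H1 H2.
  have := all3 (P := fun x => all (fun y => ~~ (C3 x y && C3 y x)) l3) (ltac:(by vm_compute)) x.
  by move/allP/(_ y (l3P y)); rewrite H1 H2.
Qed.

Lemma e5_O5 : in_O5 e5.
Proof.
split; [split|split].
- move=> x; apply/negbTE; move: x; apply: all5; by vm_compute.
- by move=> x y; rewrite /e5 orbC.
- exists val; split; first exact: val_inj.
  move=> x y u v.
  have := all5 (P := fun x => all (fun y => all (fun u => all (fun v =>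
     e5 x y ==> e5 u v ==> ~~ ((val x < val u) && (val u < val y) && (val y < val v))) l5) l5) l5)
     (ltac:(by vm_compute)) x.
  by move/allP/(_ y (l5P y))/allP/(_ u (l5P u))/allP/(_ v (l5P v)) => /implyP H /H /implyP.
- move=> s; case: s => [|x [|y [|z [|w [|v s]]]]] Hu Hs Hc; try by [].
  + have := all5 (P := fun x => all (fun y => all (fun z =>
       ~~ (uniq [:: x; y; z] && cycle e5 [:: x; y; z])) l5) l5) (ltac:(by vm_compute)) x.
    by move/allP/(_ y (l5P y))/allP/(_ z (l5P z)); rewrite Hu Hc.
  + have := all5 (P := fun x => all (fun y => all (fun z => all (fun w =>
       ~~ (uniq [:: x; y; z; w] && cycle e5 [:: x; y; z; w])) l5) l5) l5) (ltac:(by vm_compute)) x.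
    by move/allP/(_ y (l5P y))/allP/(_ z (l5P z))/allP/(_ w (l5P w)); rewrite Hu Hc.
Qed.

Lemma a5_or : orientation a5 e5.
Proof.
split; last by [].
split.
- move=> x; apply/negbTE; move: x; apply: all5; by vm_compute.
- move=> x y H1 H2.
  have := all5 (P := fun x => all (fun y => ~~ (a5 x y && a5 y x)) l5) (ltac:(by vm_compute)) x.
  by move/allP/(_ y (l5P y)); rewrite H1 H2.
Qed.

Lemma no_col n (phi : 'I_5 -> 'I_n) : n < 3 -> (forall i j, a5 i j -> phi i != phi j) -> False.
Proof.
case: n phi => [|[|[|n]]] phi // _ D.
- by case: (phi k0).
- by have := D k0 k1 isT; rewrite (ord1 (phi k0)) (ord1 (phi k1)) eqxx.
- have E02 := I2 (D k0 k1 isT) (D k1 k2 isT).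
  have E24 := I2 (D k2 k3 isT) (D k3 k4 isT).
  by have := D k4 k0 isT; rewrite -E24 -E02 eqxx.
Qed.

Theorem theorem2 :
  (forall (T : finType) (e a : rel T), in_O5 e -> orientation a e ->
     push_hom a C3) /\
  family_push_chromatic_number in_O5 3.
Proof.
have P1 : forall (T : finType) (e a : rel T), in_O5 e -> orientation a e -> push_hom a C3.
  move=> T e a He Ha; have [c gc] := color_all He Ha setT.
  exists [set z | (c z).2], (fun z => (c z).1) => x y; rewrite /push !inE.
  case X: ((c x).2 (+) (c y).2) => Hxy.
  - by have := gc y x (in_setT _) (in_setT _) Hxy; rewrite /ok addbC X.
  - by have := gc x y (in_setT _) (in_setT _) Hxy; rewrite /ok X.
split => //; split.
- move=> T e a He Ha; exists C3; split; [exact: C3_oriented | exact: P1 He Ha].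
- exists 'I_5, e5, a5; split; first exact: e5_O5.
  split; first exact: a5_or.
  split.
  + exists C3; split; [exact: C3_oriented | exact: P1 e5_O5 a5_or].
  + move=> n n3 [H [[Hirr _] [S [phi hom]]]].
    apply: (@no_col n phi n3) => i j aij.
    case X: ((i \in S) (+) (j \in S)).
    * have : push a5 S j i by rewrite /push addbC X.
      move/hom; apply: contraTneq => ->; by rewrite Hirr.
    * have : push a5 S i j by rewrite /push X.
      move/hom; apply: contraTneq => ->; by rewrite Hirr.
Qed.
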